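(* Let $\mathfrak g$ be a real Lie algebra and $\mathfrak h\subset\mathfrak g$ a Lie subalgebra. Let $\mathfrak h^\perp:=\{f\in\mathfrak g^*\mid f(\mathfrak h)=0\}$, $r_{\mathfrak g,\mathfrak h}:=\min_{f\in\mathfrak h^\perp}\dim\mathfrak g_f$, and $\mathfrak h^\perp_{\min}:=\{f\in\mathfrak h^\perp\mid\dim\mathfrak g_f=r_{\mathfrak g,\mathfrak h}\}$. Then for every $f_0\in\mathfrak h^\perp_{\min}$ one has $[\mathfrak g_{f_0},\mathfrak g_{f_0}]\subset\mathfrak h_{f_0}$.
   Context: $\mathfrak g$ acts on $\mathfrak g^*$ by the coadjoint action; $\mathfrak g_f:=\{Y\in\mathfrak g\mid Yf=0\}$ is the stabilizer of $f$ in $\mathfrak g$ and $\mathfrak h_f:=\mathfrak g_f\cap\mathfrak h$. *)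

(* Defs.v *)
From HB Require Import structures.
From mathcomp Require Import all_boot all_order all_algebra.
From mathcomp Require Import reals.
Set Implicit Arguments. Unset Strict Implicit. Unset Printing Implicit Defensive.
Import GRing.Theory.
Local Open Scope ring_scope.

(* A finite-dimensional real Lie algebra: a vectType V over R : realType,
   with a bracket br : 'Hom(V, 'End(V)) (so br is bilinear by construction),
   [x, y] := br x y. *)
Definition is_lie_bracket (R : realType) (V : vectType R) (br : 'Hom(V, 'End(V))) :=
  (forall x : V, br x x = 0) /\
  (forall x y z : V, br x (br y z) + br y (br z x) + br z (br x y) = 0).

Definition is_subalgebra (R : realType) (V : vectType R) (br : 'Hom(V, 'End(V)))
  (h : {vspace V}) := forall x y, x \in h -> y \in h -> br x y \in h.

(* g^* is 'Hom(V, R^o). Coadjoint action: (Y.f)(X) = - f([Y,X]); the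
   stabilizer g_f = {Y | Y.f = 0} is the kernel of Y |-> f \o ad Y. *)
Definition stab (R : realType) (V : vectType R) (br : 'Hom(V, 'End(V)))
  (f : 'Hom(V, R^o)) : {vspace V} :=
  lker (linfun (fun Y : V => (f \o br Y)%VF)).

Definition in_hperp (R : realType) (V : vectType R) (h : {vspace V})
  (f : 'Hom(V, R^o)) := forall x, x \in h -> f x = 0.

Definition in_hperp_min (R : realType) (V : vectType R) (br : 'Hom(V, 'End(V)))
  (h : {vspace V}) (f0 : 'Hom(V, R^o)) :=
  in_hperp h f0 /\
  forall f, in_hperp h f -> (\dim (stab br f0) <= \dim (stab br f))%N.

(* Main.v *)
Require Import Defs.
From HB Require Import structures.
From mathcomp Require Import all_boot all_order all_algebra.
From mathcomp Require Import reals zify.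
Set Implicit Arguments. Unset Strict Implicit. Unset Printing Implicit Defensive.
Import GRing.Theory Num.Theory.
Local Open Scope ring_scope.

Lemma mx_eig (R : realType) m (B : 'M[R]_m) :
  exists t : R, t != 0 /\ forall v : 'rV_m, v + t *: (v *m B) = 0 -> v = 0.
Proof.
set rs := [seq - (k.+1)%:R : R | k <- iota 0 m.+1].
have : ~~ all (root (char_poly B)) rs.
  apply/negP => Hall.
  have Hu : uniq rs.
    rewrite map_inj_uniq ?iota_uniq // => i j /eqP.
    by rewrite eqr_opp eqr_nat eqSS => /eqP.
  have := max_poly_roots (monic_neq0 (char_poly_monic B)) Hall Hu.
  by rewrite size_char_poly size_map size_iota ltnn.
case/allPn => s /mapP [k _ ->] Hnr.
exists (k.+1%:R)^-1; split; first by rewrite invr_eq0 pnatr_eq0.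
move=> v Hv; apply/eqP/negPn/negP => vn0.
move: Hnr; rewrite -eigenvalue_root_char => /negP; apply.
apply/eigenvalueP; exists v => //.
have Hv' : (k.+1%:R)^-1 *: (v *m B) = - v.
  by rewrite -[X in X = _](addKr v) Hv addr0.
have := congr1 (fun x => k.+1%:R *: x) Hv'; rewrite /= scalerA mulfV ?pnatr_eq0 // scale1r => ->.
by rewrite scalerN scaleNr.
Qed.

Lemma pencil (R : realType) (V W : vectType R) (a c : 'Hom(V, W)) (y : V) :
  y \in lker a -> c y \notin limg a ->
  exists t : R, t != 0 /\ (\dim (lker (a + t *: c)%R) < \dim (lker a))%N.
Proof.
move=> ya cya.
set r := \dim (limg a).
set X := vbasis (limg a).
have /andP[/eqP spX frX] := vbasisP (limg a).
pose E : r.+1.-tuple W := [tuple of c y :: X].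
have Ef : free E by rewrite free_cons /= spX cya.
pose g : 'I_r.+1 -> W := fun i => if (i : nat) == 0%N then 0 else c (a^-1%VF (E`_i)).
pose C : 'M[R]_r.+1 := \matrix_(i, j) coord E j (g i).
have [t [tn0 Ht]] := mx_eig C.
exists t; split => //.
pose G := [tuple E`_i + t *: g i | i < r.+1].
have Gf : free G.
  apply/freeP => k Hk i.
  have := Ht (\row_i k i).
  have -> : \row_i k i + t *: (\row_i k i *m C) = 0.
    have HG : \sum_(l < r.+1) k l *: G`_l
        = \sum_(l < r.+1) k l *: E`_l + t *: \sum_(l < r.+1) k l *: g l.
      rewrite scaler_sumr -big_split; apply: eq_bigr => l _.
      by rewrite nth_mktuple scalerDr !scalerA mulrC.
    apply/rowP => j; rewrite !mxE.
    have H := congr1 (coord E j) Hk; rewrite HG linear0 linearD linearZ /= in H.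
    rewrite coord_sum_free // linear_sum /= in H.
    rewrite -[RHS]H; congr (_ + _ * _); apply: eq_bigr => l _.
    by rewrite !mxE linearZ.
  by move/(_ erefl)/rowP/(_ i); rewrite !mxE.
have GS : (<<G>> <= limg ((a + t *: c)%R))%VS.
  apply/span_subvP => x /tnthP [i ->]; rewrite tnth_mktuple /g.
  case: eqP => [i0 | in0].
    have -> : E`_i = c y by rewrite (_ : (i : nat) = 0%N).
    rewrite scaler0 addr0.
    have -> : c y = (a + t *: c) (t^-1 *: y).
      rewrite add_lfunE scale_lfunE !linearZ /= (eqP (_ : a y == 0)) -?memv_ker //.
      by rewrite scaler0 add0r scalerA mulVf // scale1r.
    exact: memv_img (memvf _).
  have EiX : E`_i \in limg a.
    case: i in0 => [[|j] Hj] //= _.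
    by apply: vbasis_mem; rewrite mem_nth // size_tuple -ltnS.
  have -> : E`_i + t *: c (a^-1%VF E`_i) = (a + t *: c) (a^-1%VF E`_i).
    by rewrite add_lfunE scale_lfunE limg_lfunVK.
  exact: memv_img (memvf _).
have := dimvS GS; rewrite (eqP Gf) size_tuple => Hd.
have e1 := limg_ker_dim (a + t *: c) fullv.
have e2 := limg_ker_dim a fullv.
rewrite !capfv in e1 e2.
rewrite -/r in e2.
lia.
Qed.

Lemma separate (R : realType) (V : vectType R) (h : {vspace V}) (v : V) :
  v \notin h -> exists phi : 'Hom(V, R^o), (forall x, x \in h -> phi x = 0) /\ phi v != 0.
Proof.
move=> vh.
set d := \dim h. set X := vbasis h.
have /andP[/eqP spX frX] := vbasisP h.
pose E : d.+1.-tuple V := [tuple of v :: X].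
have Ef : free E by rewrite free_cons /= spX vh.
exists (linfun (coord E ord0 : V -> R^o)); split; last first.
  rewrite (lfunE (coord E ord0 : {linear V -> R^o})).
  have H : coord E ord0 v = 1.
    by have := coord_free (@ord0 d) ord0 Ef; rewrite eqxx.
  by apply/eqP => H0; move: H; rewrite H0 => /eqP; rewrite eq_sym oner_eq0.
move=> x xh.
rewrite (lfunE (coord E ord0 : {linear V -> R^o})).
have xX : x \in <<X>>%VS by rewrite spX.
pose k : 'I_d.+1 -> R := fun i => if unlift ord0 i is Some j then coord X j x else 0.
have -> : x = \sum_(i < d.+1) k i *: E`_i.
  rewrite big_ord_recl /k unlift_none scale0r add0r {1}(coord_span xX).
  apply: eq_bigr => j _; rewrite liftK lift0 //.
apply: etrans (coord_sum_free k ord0 Ef) _.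
by rewrite /k unlift_none.
Qed.

Definition coad (R : realType) (V : vectType R) (br : 'Hom(V, 'End(V)))
  (f : 'Hom(V, R^o)) (Y : V) : 'Hom(V, R^o) := (f \o br Y)%VF.

Lemma coad_lin (R : realType) (V : vectType R) (br : 'Hom(V, 'End(V)))
  (f : 'Hom(V, R^o)) : linear (coad br f).
Proof.
by move=> k x y; rewrite /coad linearD linearZ /= comp_lfunDr -comp_lfunZr.
Qed.

HB.instance Definition _ (R : realType) (V : vectType R) (br : 'Hom(V, 'End(V)))
  (f : 'Hom(V, R^o)) :=
  GRing.isLinear.Build R V 'Hom(V, R^o) *:%R (coad br f) (coad_lin br f).

Lemma stabE (R : realType) (V : vectType R) (br : 'Hom(V, 'End(V)))
  (f : 'Hom(V, R^o)) (W : V) :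
  (W \in stab br f) <-> (forall X, f (br W X) = 0).
Proof.
have -> : stab br f = lker (linfun (coad br f)) by [].
have E1 : linfun (coad br f) W = (f \o br W)%VF by rewrite lfunE.
rewrite memv_ker E1; split.
  move/eqP => H X; have := congr1 (fun g : 'Hom(V, R^o) => g X) H.
  by rewrite /= !lfunE.
move=> H; apply/eqP/lfunP => X.
by rewrite (comp_lfunE f (br W) X) H zero_lfunE.
Qed.

Theorem lemma2p12 (R : realType) (V : vectType R) (br : 'Hom(V, 'End(V)))
  (h : {vspace V}) :
  is_lie_bracket br -> is_subalgebra br h ->
  forall f0 : 'Hom(V, R^o), in_hperp_min br h f0 ->
  forall Y Z : V, Y \in stab br f0 -> Z \in stab br f0 ->
    br Y Z \in (stab br f0 :&: h)%VS.
Proof.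
move=> [Hxx Hjac] _ f0 [Hp Hmin] Y Z HY HZ.
have anti : forall x y, br x y = - br y x.
  move=> x y; have := Hxx (x + y).
  rewrite !linearD /= !add_lfunE !Hxx add0r addr0 addrC => /eqP.
  by rewrite addr_eq0 => /eqP.
have /stabE HY' := HY; have /stabE HZ' := HZ.
rewrite memv_cap; apply/andP; split.
  apply/stabE => X.
  have := congr1 f0 (Hjac X Y Z); rewrite !linearD /= HY' HZ' !addr0 linear0 => H.
  by rewrite anti linearN /= H oppr0.
apply/negPn/negP => nh.
have [phi [phih phiv]] := separate nh.
pose a := linfun (coad br f0); pose c := linfun (coad br phi).
have ya : Y \in lker a := HY.
have cya : c Y \notin limg a.
  apply/memv_imgP => [[W _ eqW]].
  move: phiv; apply/negP; rewrite negbK.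
  have := congr1 (fun g : 'Hom(V, R^o) => g Z) eqW.
  rewrite /c /a (lfunE (coad br phi)) (lfunE (coad br f0)) /coad.
  rewrite (comp_lfunE phi (br Y) Z) (comp_lfunE f0 (br W) Z) => ->.
  by rewrite anti linearN /= HZ' oppr0.
have [t [tn0 Hlt]] := pencil ya cya.
have Hh : in_hperp h (f0 + t *: phi).
  by move=> x xh; rewrite add_lfunE scale_lfunE Hp // phih // scaler0 addr0.
have := Hmin _ Hh.
have -> : stab br (f0 + t *: phi) = lker (a + t *: c).
  change (lker (linfun (coad br (f0 + t *: phi))) = lker (a + t *: c)).
  congr lker; apply/lfunP => W.
  rewrite add_lfunE scale_lfunE !lfunE.
  change (((f0 + t *: phi) \o br W)%VF = (f0 \o br W)%VF + t *: (phi \o br W)%VF).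
  by rewrite (comp_lfunDl f0 (t *: phi) (br W)) (comp_lfunZl t phi (br W)).
by rewrite leqNgt Hlt.
Qed.
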